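(* Consider the no-show model with homogeneous costs and the network $(\mathcal G,\mathcal E)$ in the context. For $j\in[N]$, $\rho\ge0$, $\mathbf s\in\mathcal S$ and $p\ge1$, assign to each arc $(k,\ell)\in\mathcal E$ the length $g_{k\ell j}=f_{1j}(1-\bar\lambda_1,y_1)$ if $k=\texttt S$ and $\ell=(\bar\lambda_1,y_1)$; $g_{k\ell j}=f_{ij}(\bar\lambda_{i-1}-\bar\lambda_i+1,y_i)$ if $k=(\bar\lambda_{i-1},y_{i-1})\in\mathcal L(i-1)$ and $\ell=(\bar\lambda_i,y_i)\in\mathcal L(i)$, $i\in[2,n]$; $g_{k\ell j}=0$ if $\ell=\texttt E$. Then $$\omega'_j(\rho,\mathbf s)=\max_{\mathbf z}\sum_{(k,\ell)\in\mathcal E}g_{k\ell j}z_{k\ell}\ \text{ s.t. }\sum_{\ell:(k,\ell)\in\mathcal E}z_{k\ell}-\sum_{\ell:(\ell,k)\in\mathcal E}z_{\ell k}=\begin{cases}1&k=\texttt S\\0&k\ne\texttt S,\texttt E\\-1&k=\texttt E\end{cases}\ \forall k\in\mathcal G,\quad z_{k\ell}\ge0\ \forall(k,\ell)\in\mathcal E,$$ where $\omega'_j(\rho,\mathbf s)=\sup_{\boldsymbol\xi\in\Xi}\{g(\mathbf s,\boldsymbol\xi)-\rho\|\boldsymbol\xi-\widehat{\boldsymbol\xi}^j\|_p^p\}$.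
   Context: Notation: $[m]=\{1,\dots,m\}$. $n,N\ge1$, $T>0$, $\mathcal S=\{\mathbf s\in\mathbb R^n:\mathbf s\ge0,\sum_is_i\le T\}$. Homogeneous costs $c_1=\dots=c_n=1$, $d_1=\dots=d_n=d_0\ge0$, overtime $C\ge0$. Bounds $0\le u^L_i<u^U_i<\infty$; integer $K\in[n]$. $\Lambda=\{\boldsymbol\lambda\in\{0,1\}^n:\sum_i(1-\lambda_i)\le K\}$, $\Xi=\{(\boldsymbol\mu,\boldsymbol\lambda)\in\mathbb R^n\times\Lambda:u^L_i\lambda_i\le\mu_i\le u^U_i\lambda_i\}$, data $\widehat{\boldsymbol\xi}^j=(\widehat{\boldsymbol\mu}^j,\widehat{\boldsymbol\lambda}^j)\in\Xi$. $g(\mathbf s,\boldsymbol\xi)$ is the optimal value of $\min_{\mathbf w\in\mathbb R^{n+1},\mathbf v\in\mathbb R^n}\sum_{i}(c_i\lambda_iw_i+d_iv_i)+Cw_{n+1}$ s.t. $w_i-v_{i-1}=\mu_{i-1}+w_{i-1}-s_{i-1}$ ($i=2,\dots,n+1$), $\mathbf w\ge0,w_1=0,\mathbf v\ge0$. For $\lambda_i\in\{0,1\}$, $y_i\in\mathbb R$: $f_{ij}(\lambda_i,y_i)=\sup_{u^L_i\lambda_i\le\mu_i\le u^U_i\lambda_i}\{y_i(\mu_i-s_i)-\rho|\mu_i-\widehat\mu^j_i|^p-\rho|\lambda_i-\widehat\lambda^j_i|^p\}$. Network: $\mathcal Y_i=\{-d_0+m:m=0,\dots,n-i\}\cup\{C+m:m=0,\dots,n-i\}$,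 layers $\mathcal L(i)=\{(\bar\lambda,y):\bar\lambda\in\{0,\dots,K\},y\in\mathcal Y_i\}$, nodes $\mathcal G=\bigcup_{i=1}^n\mathcal L(i)\cup\{\texttt S,\texttt E\}$. Arcs: from $\texttt S$ to each $(\bar\lambda_1,y_1)\in\mathcal L(1)$ with $\bar\lambda_1\in\{0,1\}$; for $i\in[2,n]$ from $(\bar\lambda_{i-1},y_{i-1})\in\mathcal L(i-1)$ to $(\bar\lambda_i,y_i)\in\mathcal L(i)$ whenever $\bar\lambda_i\in\{\bar\lambda_{i-1},\bar\lambda_{i-1}+1\}$ and $y_{i-1}\in\{-d_0,\ y_i+(\bar\lambda_{i-1}-\bar\lambda_i+1)\}$; and from each node of $\mathcal L(n)$ to $\texttt E$. *)

(* Defs.v *)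
From HB Require Import structures.
From mathcomp Require Import all_boot all_order all_algebra.
From mathcomp Require Import all_classical all_reals all_analysis.
Set Implicit Arguments. Unset Strict Implicit. Unset Printing Implicit Defensive.
Import Order.TTheory GRing.Theory Num.Theory.
Local Open Scope classical_set_scope.
Local Open Scope ring_scope.

(* Conventions: all vectors are functions nat -> R indexed 1-based, as in the
   paper; only the entries 1..n (resp. 1..n+1 for w) are ever used. *)

Section NoShow.
Variable R : realType.

Definition recourse_obj (n : nat) (c d : nat -> R) (C : R) (lam w v : nat -> R) : R :=
  \sum_(1 <= i < n.+1) (c i * lam i * w i + d i * v i) + C * w n.+1.

Definition recourse_feas (n : nat) (s mu w v : nat -> R) : Prop :=
  (forall i, (2 <= i <= n.+1)%N -> w i - v i.-1 = mu i.-1 + w i.-1 - s i.-1) /\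
  (forall i, (1 <= i <= n.+1)%N -> 0 <= w i) /\ w 1%N = 0 /\
  (forall i, (1 <= i <= n)%N -> 0 <= v i).

Definition g_val (n : nat) (c d : nat -> R) (C : R) (s mu lam : nat -> R) : R :=
  inf [set r | exists w v, recourse_feas n s mu w v /\ r = recourse_obj n c d C lam w v].

Definition inXi (n K : nat) (uL uU : nat -> R) (mu lam : nat -> R) : Prop :=
  (forall i, (1 <= i <= n)%N -> lam i = 0 \/ lam i = 1) /\
  \sum_(1 <= i < n.+1) (1 - lam i) <= K%:R /\
  (forall i, (1 <= i <= n)%N -> uL i * lam i <= mu i <= uU i * lam i).

Definition dist_pp (n : nat) (p : R) (mu lam muh lamh : nat -> R) : R :=
  \sum_(1 <= i < n.+1) (`|mu i - muh i| `^ p + `|lam i - lamh i| `^ p).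

Definition omega' (n K : nat) (d0 C : R) (uL uU : nat -> R) (p rho : R)
    (s muh lamh : nat -> R) : \bar R :=
  ereal_sup [set x : \bar R | exists mu lam, inXi n K uL uU mu lam /\
     x = (g_val n (fun _ => 1) (fun _ => d0) C s mu lam
          - rho * dist_pp n p mu lam muh lamh)%:E].

Definition f_ij (uL uU : nat -> R) (p rho : R) (s muh lamh : nat -> R)
    (i : nat) (la y : R) : R :=
  sup [set r | exists mu, uL i * la <= mu <= uU i * la /\
     r = y * (mu - s i) - rho * (`|mu - muh i| `^ p) - rho * (`|la - lamh i| `^ p)].

(* Network.  A node is (layer, lambdabar, y): layer 0 is the source S,
   layer n+1 is the sink E, layer i in 1..n is L(i). *)
Definition node := (nat * nat * R)%type.
Definition nodeS : node := (0%N, 0%N, 0).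
Definition nodeE (n : nat) : node := (n.+1, 0%N, 0).
Definition layer (k : node) : nat := k.1.1.
Definition lbar (k : node) : nat := k.1.2.
Definition yval (k : node) : R := k.2.

Definition Yset (n : nat) (d0 C : R) (i : nat) : seq R :=
  [seq - d0 + m%:R | m <- iota 0 (n - i).+1] ++ [seq C + m%:R | m <- iota 0 (n - i).+1].

Definition Lset (n K : nat) (d0 C : R) (i : nat) : seq node :=
  [seq ((i, lb), y) | lb <- iota 0 K.+1, y <- Yset n d0 C i].

Definition nodes (n K : nat) (d0 C : R) : seq node :=
  undup (nodeS :: nodeE n :: flatten [seq Lset n K d0 C i | i <- iota 1 n]).

Definition is_arc (n : nat) (d0 : R) (kl : node * node) : bool :=
  let: (k, l) := kl in
  [&& layer k == 0%N, layer l == 1%N & lbar l <= 1]%N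
  || [&& layer l == n.+1, layer k == n, lbar l == 0%N & yval l == 0]
  || [&& (2 <= layer l <= n)%N, layer k == (layer l).-1,
         (lbar l == lbar k) || (lbar l == (lbar k).+1) &
         (yval k == - d0) || (yval k == yval l + ((lbar k)%:R - (lbar l)%:R + 1))].

Definition arcs (n K : nat) (d0 C : R) : seq (node * node) :=
  [seq kl <- [seq (k, l) | k <- nodes n K d0 C, l <- nodes n K d0 C] | is_arc n d0 kl].

Definition arc_len (n : nat) (uL uU : nat -> R) (p rho : R) (s muh lamh : nat -> R)
    (kl : node * node) : R :=
  let: (k, l) := kl in
  if layer k == 0%N then f_ij uL uU p rho s muh lamh 1 (1 - (lbar l)%:R) (yval l)
  else if layer l == n.+1 then 0
  else f_ij uL uU p rho s muh lamh (layer l) ((lbar k)%:R - (lbar l)%:R + 1) (yval l).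

Definition path_lp (n K : nat) (d0 C : R) (uL uU : nat -> R) (p rho : R)
    (s muh lamh : nat -> R) : \bar R :=
  let A := arcs n K d0 C in
  ereal_sup [set x : \bar R | exists z : node * node -> R,
     (forall kl, kl \in A -> 0 <= z kl) /\
     (forall k, k \in nodes n K d0 C ->
        \sum_(kl <- A | kl.1 == k) z kl - \sum_(kl <- A | kl.2 == k) z kl
        = (if k == nodeS then 1 else if k == nodeE n then -1 else 0)) /\
     x = (\sum_(kl <- A) arc_len n uL uU p rho s muh lamh kl * z kl)%:E].

End NoShow.

(* Main.v *)
Require Import Defs.
From HB Require Import structures.
From mathcomp Require Import all_boot all_order all_algebra.
From mathcomp Require Import all_classical all_reals all_analysis.
From mathcomp Require Import zify.
Import Order.TTheory GRing.Theory Num.Theory.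
Local Open Scope classical_set_scope.
Local Open Scope ring_scope.
Set Implicit Arguments. Unset Strict Implicit. Unset Printing Implicit Defensive.

Lemma big_seq_pred1 (R : realType) (T : eqType) (r : seq T) (j : T) (F : T -> R) :
  uniq r -> j \in r -> \sum_(i <- r | i == j) F i = F j.
Proof. by move=> u jr; rewrite -big_filter filter_pred1_uniq // big_seq1. Qed.

Lemma big_partition_seq (R : realType) (T U : eqType) (A : seq T) (N : seq U)
   (h : T -> U) (F : T -> R) :
  uniq N -> (forall x, x \in A -> h x \in N) ->
  \sum_(x <- A) F x = \sum_(k <- N) \sum_(x <- A | h x == k) F x.
Proof.
move=> uN hA; rewrite (exchange_big_dep xpredT) //=.
rewrite big_seq_cond [RHS]big_seq_cond; apply: eq_bigr => x /andP[xA _].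
rewrite -big_filter (eq_filter (a2 := pred1 (h x))); last by move=> k /=; rewrite eq_sym.
by rewrite filter_pred1_uniq ?big_seq1 // hA.
Qed.

Lemma big_indicator (R : realType) (T : eqType) (A P : seq T) (Q : pred T) (F : T -> R) :
  uniq A -> uniq P -> {subset P <= A} ->
  \sum_(x <- A | Q x) F x * (x \in P)%:R = \sum_(x <- P | Q x) F x.
Proof.
move=> uA uP sPA.
rewrite (eq_bigr (fun x => if x \in P then F x else 0)); last first.
  by move=> x _; case: (x \in P); rewrite ?mulr1 ?mulr0.
rewrite -big_mkcondr (eq_bigl (fun x => (x \in P) && Q x)); last by move=> x; rewrite andbC.
rewrite -big_filter_cond.
apply: perm_big; apply: uniq_perm; first by rewrite filter_uniq.
  by [].
by move=> x; rewrite mem_filter; case xP: (x \in P) => //=; rewrite sPA.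
Qed.

Section Net.
Variables (R : realType) (n K : nat) (d0 C : R).

Local Notation N := (nodes n K d0 C).
Local Notation A := (arcs n K d0 C).

Lemma nodeS_in : nodeS R \in N.
Proof. by rewrite mem_undup !inE eqxx. Qed.
Lemma nodeE_in : nodeE R n \in N.
Proof. by rewrite mem_undup !inE eqxx orbT. Qed.

Lemma nodes_L i lb y : (1 <= i <= n)%N -> (lb <= K)%N -> y \in Yset n d0 C i ->
  ((i, lb), y) \in N.
Proof.
move=> hi hlb hy; rewrite mem_undup !inE; apply/orP; right; apply/orP; right.
apply/flatten_mapP; exists i; first by rewrite mem_iota; lia.
by apply: (allpairs_f (fun lb y => ((i, lb), y))); rewrite // mem_iota; lia.
Qed.

Lemma mem_nodes k : k \in N -> k = nodeS R \/ k = nodeE R n \/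
  [/\ (1 <= layer k <= n)%N, (lbar k <= K)%N & yval k \in Yset n d0 C (layer k)].
Proof.
rewrite mem_undup !inE => /orP[/eqP->|/orP[/eqP->|/flatten_mapP[i]]]; [by left|by right;left|].
rewrite mem_iota => hi /allpairsP [[lb y] [hlb hy ->]]; right; right.
rewrite mem_iota /= in hlb.
rewrite /layer /lbar /yval /=; split => //; lia.
Qed.

Lemma nodes_layer k : k \in N -> (layer k <= n.+1)%N.
Proof.
move=> /mem_nodes [->|[->|[h _ _]]] //; move: h; rewrite /layer /nodeS /nodeE /=; lia.
Qed.

Lemma nodes_layer0 k : k \in N -> layer k = 0%N -> k = nodeS R.
Proof.
move=> /mem_nodes [->|[->|[h _ _]]] //; move: h; rewrite /layer /nodeS /nodeE /=; lia.
Qed.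

Lemma nodes_layerE k : k \in N -> layer k = n.+1 -> k = nodeE R n.
Proof.
move=> /mem_nodes [->|[->|[h _ _]]] //; move: h; rewrite /layer /nodeS /nodeE /=; lia.
Qed.

Lemma mem_arcs k l : ((k, l) \in A) = [&& k \in N, l \in N & is_arc n d0 (k, l)].
Proof.
rewrite /arcs mem_filter.
have -> : ((k, l) \in [seq (x, y) | x <- N, y <- N]) = (k \in N) && (l \in N).
  apply/idP/idP.
    by move=> /allpairsP [[a b] [/= ha hb [e1 e2]]]; subst; rewrite ha hb.
  by move=> /andP[hk hl]; apply: (allpairs_f (fun x y => (x, y))).
by rewrite andbC -andbA.
Qed.

Lemma uniq_arcs : uniq A.
Proof.
rewrite filter_uniq // allpairs_uniq ?undup_uniq //.
by move=> [a b] [c d] _ _ /= [-> ->].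
Qed.

Lemma arc_layer k l : (k, l) \in A -> layer l = (layer k).+1 /\ (layer l <= n.+1)%N.
Proof.
rewrite mem_arcs => /and3P[hk hl ha]; split; last exact: nodes_layer.
move: ha; rewrite /is_arc /= => /orP[/orP[H|H]|H].
- by case/and3P: H => /eqP -> /eqP ->.
- by case/and4P: H => /eqP -> /eqP ->.
- case/and4P: H => h2 /eqP h3 _ _; lia.
Qed.

End Net.

From mathcomp Require Import ring lra.

Section Dual.
Variables (R : realType) (n : nat) (d0 C : R) (s : nat -> R).

Lemma tele (y w v : nat -> R) m :
  \sum_(1 <= i < m.+1) y i * (w i.+1 - v i - w i) =
  y m * w m.+1 - y 0%N * w 1%N + \sum_(1 <= i < m.+1) ((y i.-1 - y i) * w i - y i * v i).
Proof.
elim: m => [|m IH]; first by rewrite !big_geq //; ring.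
rewrite big_nat_recr //= IH [X in _ = _ + X]big_nat_recr //=; ring.
Qed.

Lemma gap (lam mu w v y : nat -> R) : recourse_feas n s mu w v ->
  recourse_obj n (fun _ => 1) (fun _ => d0) C lam w v - \sum_(1 <= i < n.+1) y i * (mu i - s i)
  = \sum_(1 <= i < n.+1) ((lam i - y i.-1 + y i) * w i + (d0 + y i) * v i)
    + (C - y n) * w n.+1.
Proof.
move=> [hf [hw [w1 hv]]].
have -> : \sum_(1 <= i < n.+1) y i * (mu i - s i) =
          \sum_(1 <= i < n.+1) y i * (w i.+1 - v i - w i).
  apply: eq_big_nat => i hi; congr (_ * _).
  have := hf i.+1; rewrite /=; move=> h; rewrite h; [ring|lia].
rewrite tele w1 /recourse_obj.
have -> : \sum_(1 <= i < n.+1) ((lam i - y i.-1 + y i) * w i + (d0 + y i) * v i) =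
   \sum_(1 <= i < n.+1) (1 * lam i * w i + d0 * v i) -
   \sum_(1 <= i < n.+1) ((y i.-1 - y i) * w i - y i * v i).
  by rewrite -sumrB; apply: eq_bigr => i _; ring.
ring.
Qed.

Fixpoint wg (mu : nat -> R) (k : nat) : R :=
  match k with
  | 0 => 0
  | k'.+1 => if k' is 0 then 0 else
      let x := wg mu k' + mu k' - s k' in if 0 < x then x else 0
  end.

Definition vg (mu : nat -> R) (i : nat) : R := wg mu i.+1 - (wg mu i + mu i - s i).

Lemma wg_ge0 mu i : 0 <= wg mu i.
Proof.
case: i => [|[|i]] //=; case: ifP => // h; exact: ltW.
Qed.

Lemma wgS mu i : (1 <= i)%N ->
  wg mu i.+1 = if 0 < wg mu i + mu i - s i then wg mu i + mu i - s i else 0.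
Proof. by case: i. Qed.

Lemma greedy_feas mu : recourse_feas n s mu (wg mu) (vg mu).
Proof.
split; [|split; [|split]].
- move=> i hi; rewrite /vg; have -> : i.-1.+1 = i by lia.
  ring.
- move=> i _; exact: wg_ge0.
- by [].
- move=> [|i] hi; first lia.
  rewrite /vg /=; case: ifP => h; first by rewrite subrr.
  rewrite sub0r oppr_ge0; move/negbT: h; rewrite -leNgt //.
Qed.

Variable lam : nat -> R.
Variable mu : nat -> R.

Fixpoint ys (k : nat) : R :=
  match k with
  | 0 => if 0 < wg mu n.+1 then C else - d0
  | k'.+1 => if 0 < wg mu (n - k') then ys k' + lam (n - k') else - d0
  end.

Definition ystar (i : nat) : R := ys (n - i).

Lemma ystar_n : ystar n = if 0 < wg mu n.+1 then C else - d0.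
Proof. by rewrite /ystar subnn. Qed.

Lemma ystar_S i : (1 <= i < n)%N ->
  ystar i = if 0 < wg mu i.+1 then ystar i.+1 + lam i.+1 else - d0.
Proof.
move=> hi; rewrite /ystar.
have -> : (n - i = (n - i.+1).+1)%N by lia.
by rewrite /= (_ : (n - (n - i.+1) = i.+1)%N) //; lia.
Qed.

Lemma ystar_last i : (1 <= i <= n)%N -> ~~ (0 < wg mu i.+1) -> ystar i = - d0.
Proof.
move=> hi h; have [e|ne] := eqVneq i n; first by subst i; rewrite ystar_n (negbTE h).
rewrite ystar_S; last lia.
by case: ifP h => // ->.
Qed.

Lemma greedy_opt :
  recourse_obj n (fun _ => 1) (fun _ => d0) C lam (wg mu) (vg mu) =
  \sum_(1 <= i < n.+1) ystar i * (mu i - s i).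
Proof.
apply/eqP; rewrite -subr_eq0; apply/eqP.
rewrite (gap lam ystar (greedy_feas mu)).
have -> : (C - ystar n) * wg mu n.+1 = 0.
  rewrite ystar_n; case: ifP => h; first by rewrite subrr mul0r.
  have : wg mu n.+1 = 0.
    by apply/eqP; rewrite eq_le wg_ge0 andbT leNgt h.
  by move=> ->; rewrite mulr0.
rewrite addr0 big_nat big1 // => i hi.
have e1 : (lam i - ystar i.-1 + ystar i) * wg mu i = 0.
  case: i hi => [|[|i]] hi; first lia.
    by rewrite /= mulr0.
  rewrite /= ystar_S; last lia.
  case: ifP => h; first by rewrite -/(ystar i.+2); rewrite /=; ring.
  have : wg mu i.+2 = 0.
    by apply/eqP; rewrite eq_le wg_ge0 andbT leNgt h.
  by rewrite [wg mu i.+2]/= => ->; rewrite mulr0.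
have e2 : (d0 + ystar i) * vg mu i = 0.
  case h: (0 < wg mu i.+1).
    move: h; rewrite /vg wgS; last lia.
    case: ifP => [_ _|_]; [ring | by rewrite ltxx].
  rewrite ystar_last; [by rewrite addrN mul0r | lia | by rewrite h].
by rewrite e1 e2 addr0.
Qed.

End Dual.

Section Dual2.
Variables (R : realType) (n : nat) (d0 C : R) (s : nat -> R).
Hypothesis n1 : (1 <= n)%N.
Hypothesis d0ge : 0 <= d0.
Hypothesis Cge : 0 <= C.

Definition dfeas (lam y : nat -> R) :=
  [/\ forall i, (1 <= i <= n)%N -> - d0 <= y i, y n <= C &
      forall i, (2 <= i <= n)%N -> y i.-1 - y i <= lam i].

Lemma weak_dual (lam mu w v y : nat -> R) : recourse_feas n s mu w v ->
  (forall i, (1 <= i <= n)%N -> 0 <= lam i) -> dfeas lam y ->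
  \sum_(1 <= i < n.+1) y i * (mu i - s i) <=
  recourse_obj n (fun _ => 1) (fun _ => d0) C lam w v.
Proof.
move=> hf hl [hy hyn hyl]; rewrite -subr_ge0 (gap _ _ _ _ hf).
have [_ [hw [w1 hv]]] := hf.
apply: addr_ge0; last by apply: mulr_ge0; [rewrite subr_ge0 | apply: hw; lia].
rewrite big_nat; apply: sumr_ge0 => i hi; apply: addr_ge0.
  case: i hi => [|[|i]] hi; first lia.
    by rewrite w1 mulr0.
  apply: mulr_ge0; last by apply: hw; lia.
  have := hyl i.+2; rewrite /=; move=> h.
  have h' := h ltac:(lia). lra.
apply: mulr_ge0; last by apply: hv; lia.
have := hy i ltac:(lia); lra.
Qed.

Lemma dfeas_const lam : (forall i, (1 <= i <= n)%N -> 0 <= lam i) -> dfeas lam (fun _ => - d0).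
Proof.
move=> hl; split; [by move=> * | by rewrite (le_trans _ Cge) // oppr_le0 |].
by move=> i hi; rewrite subrr; apply: hl; lia.
Qed.

Lemma g_ge (lam mu y : nat -> R) :
  (forall i, (1 <= i <= n)%N -> 0 <= lam i) -> dfeas lam y ->
  \sum_(1 <= i < n.+1) y i * (mu i - s i) <= g_val n (fun _ => 1) (fun _ => d0) C s mu lam.
Proof.
move=> hl hy; apply: lb_le_inf.
  by exists (recourse_obj n (fun _ => 1) (fun _ => d0) C lam (wg s mu) (vg s mu));
     exists (wg s mu), (vg s mu); split => //; exact: greedy_feas.
by move=> r [w [v [hf ->]]]; apply: weak_dual.
Qed.

Lemma g_le (lam mu : nat -> R) :
  (forall i, (1 <= i <= n)%N -> 0 <= lam i) ->
  g_val n (fun _ => 1) (fun _ => d0) C s mu lam <=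
  \sum_(1 <= i < n.+1) ystar n d0 C s lam mu i * (mu i - s i).
Proof.
move=> hl; rewrite -greedy_opt.
apply: ge_inf; last by exists (wg s mu), (vg s mu); split => //; exact: greedy_feas.
exists (\sum_(1 <= i < n.+1) (- d0) * (mu i - s i)).
by move=> r [w [v [hf ->]]]; apply: weak_dual => //; exact: dfeas_const.
Qed.

End Dual2.

Section Main.
Variables (R : realType) (n K : nat) (d0 C : R) (uL uU : nat -> R) (p rho : R)
  (s muh lamh : nat -> R).
Hypothesis n1 : (1 <= n)%N.
Hypothesis d0ge : 0 <= d0.
Hypothesis Cge : 0 <= C.
Hypothesis hu : forall i, (1 <= i <= n)%N -> 0 <= uL i /\ uL i < uU i.
Hypothesis rho0 : 0 <= rho.

Local Notation N := (nodes n K d0 C).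
Local Notation A := (arcs n K d0 C).
Local Notation glen := (arc_len n uL uU p rho s muh lamh).
Local Notation fij := (f_ij uL uU p rho s muh lamh).

Definition is_path (q : nat -> node R) :=
  q 0%N = nodeS R /\ forall j, (j <= n)%N -> (q j, q j.+1) \in A.

Definition pathval (q : nat -> node R) := \sum_(0 <= j < n.+1) glen (q j, q j.+1).

Lemma path_layer q : is_path q -> forall j, (j <= n.+1)%N -> layer (q j) = j.
Proof.
move=> [q0 hq]; elim => [|j IH] hj; first by rewrite q0.
have [-> _] := arc_layer (hq j ltac:(lia)); rewrite IH //; lia.
Qed.

Lemma path_nodes q : is_path q -> forall j, (j <= n.+1)%N -> q j \in N.
Proof.
move=> [q0 hq] [|j] hj; first by rewrite q0 nodeS_in.
by have := hq j ltac:(lia); rewrite mem_arcs => /and3P[].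
Qed.

Lemma path_last q : is_path q -> q n.+1 = nodeE R n.
Proof.
move=> hq; apply: nodes_layerE; first exact: path_nodes.
exact: path_layer.
Qed.

Definition plam (q : nat -> node R) (i : nat) : R := (lbar (q i.-1))%:R - (lbar (q i))%:R + 1.

Lemma pathval_eq q : is_path q ->
  pathval q = \sum_(1 <= i < n.+1) fij i (plam q i) (yval (q i)).
Proof.
move=> hq; have hl := path_layer hq; have q0 := hq.1.
rewrite /pathval big_nat_recr //.
have -> : glen (q n, q n.+1) = 0.
  rewrite /arc_len hl // hl //.
  case: eqP => [|_]; first lia.
  by rewrite eqxx.
rewrite Monoid.mulm1 big_add1 /=; apply: eq_big_nat => j hj.
rewrite /arc_len /plam /= hl; last lia.
case: eqP => [->|ne].
  rewrite q0 (_ : (lbar (nodeS R))%:R = 0 :> R) //.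
  by rewrite sub0r addrC.
rewrite hl; last lia.
case: eqP => [|_]; first lia.
by [].
Qed.

Lemma nodeS_neq_E : (nodeS R == nodeE R n) = false.
Proof. by []. Qed.

Lemma path_flow q : is_path q ->
  ((pathval q)%:E <= path_lp n K d0 C uL uU p rho s muh lamh)%E.
Proof.
move=> hq; have hl := path_layer hq; have q0 := hq.1; have qE := path_last hq.
set P := [seq (q j, q j.+1) | j <- iota 0 n.+1].
have uP : uniq P.
  rewrite map_inj_in_uniq ?iota_uniq // => i j; rewrite !mem_iota => hi hj [e _].
  by rewrite -(hl i) ?e ?hl //; lia.
have sPA : {subset P <= A}.
  by move=> kl /mapP [j hj ->]; apply: hq.2; move: hj; rewrite mem_iota; lia.
have uA := uniq_arcs n K d0 C.
apply: ereal_sup_ubound; exists (fun kl => (kl \in P)%:R); split; [|split].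
- by move=> kl _; rewrite ler0n.
- move=> k kN.
  rewrite (eq_bigr (fun kl => 1 * (kl \in P)%:R)); last by move=> *; rewrite mul1r.
  rewrite [X in _ - X](eq_bigr (fun kl => 1 * (kl \in P)%:R)); last by move=> *; rewrite mul1r.
  rewrite (@big_indicator _ _ A P (fun kl => kl.1 == k)) //.
  rewrite (@big_indicator _ _ A P (fun kl => kl.2 == k)) //.
  rewrite !big_map /= big_cons.
  have -> : 0%N :: iota 1 n = rcons (iota 0 n) n by rewrite -cats1 -(iotaD 0 n 1) addn1.
  rewrite -cats1 big_cat /= big_cons big_nil.
  have -> : \sum_(j <- iota 1 n | q j == k) (1:R) = \sum_(j <- iota 0 n | q j.+1 == k) 1.
    by rewrite (iotaDl 1 0) big_map.
  rewrite q0 qE.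
  set X := \sum_(j <- iota 0 n | q j.+1 == k) 1.
  case: (eqVneq k (nodeS R)) => [e|nS].
    by subst k; rewrite eq_sym nodeS_neq_E; ring.
  case: (eqVneq k (nodeE R n)) => [e|nE]; [subst k; ring | ring].
- congr (_%:E).
  rewrite (eq_bigl (fun kl => xpredT kl)) // (@big_indicator _ _ A P xpredT) //.
  by rewrite big_map /pathval /index_iota subn0.
Qed.


Lemma arc_mid k l : (k, l) \in A -> (2 <= layer l <= n)%N ->
  ((lbar l == lbar k) || (lbar l == (lbar k).+1)) &&
  ((yval k == - d0) || (yval k == yval l + ((lbar k)%:R - (lbar l)%:R + 1))).
Proof.
rewrite mem_arcs => /and3P[_ _ ha] hl; move: ha; rewrite /is_arc /= => /orP[/orP[H|H]|H].
- by case/and3P: H => _ /eqP h _; lia.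
- by case/and4P: H => /eqP h _ _ _; lia.
- by case/and4P: H => _ _ -> ->.
Qed.

Lemma arc_first k l : (k, l) \in A -> layer k = 0%N -> (lbar l <= 1)%N.
Proof.
rewrite mem_arcs => /and3P[hk hl ha] h0; move: ha; rewrite /is_arc /= => /orP[/orP[H|H]|H].
- by case/and3P: H.
- by case/and4P: H => _ /eqP h _ _; lia.
- by case/and4P: H => /andP[h2 _] /eqP h _ _; lia.
Qed.

Lemma Yset_ge y i : y \in Yset n d0 C i -> - d0 <= y.
Proof.
rewrite mem_cat => /orP[] /mapP [m _ ->].
  by rewrite lerDl ler0n.
by rewrite (le_trans _ (_ : 0 <= C + m%:R)) ?oppr_le0 // addr_ge0 // ler0n.
Qed.

Lemma Yset_n y : y \in Yset n d0 C n -> y <= C.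
Proof.
rewrite /Yset subnn /= !inE => /orP[] /eqP ->; rewrite addr0 //.
by rewrite (le_trans _ Cge) // oppr_le0.
Qed.

Lemma path_props q : is_path q ->
  [/\ forall i, (1 <= i <= n)%N -> plam q i = 0 \/ plam q i = 1,
      \sum_(1 <= i < n.+1) (1 - plam q i) <= K%:R &
      dfeas n d0 C (plam q) (fun i => yval (q i))].
Proof.
move=> hq; have hl := path_layer hq; have q0 := hq.1; have hN := path_nodes hq.
have hmid : forall i, (1 <= i <= n)%N ->
    (lbar (q i) == lbar (q i.-1)) || (lbar (q i) == (lbar (q i.-1)).+1).
  move=> [|[|i]] hi; first lia.
    have := arc_first (hq.2 0%N ltac:(lia)); rewrite hl // q0 => /(_ erefl).
    rewrite (_ : lbar (nodeS R) = 0%N) //.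
    lia.
  have := arc_mid (hq.2 i.+1 ltac:(lia)); rewrite hl; last lia.
  by move=> /(_ ltac:(lia)) /andP[].
have hNi : forall i, (1 <= i <= n)%N -> (lbar (q i) <= K)%N /\ yval (q i) \in Yset n d0 C i.
  move=> i hi; have := mem_nodes (hN i ltac:(lia)).
  rewrite hl; last lia.
  move=> [e|[e|[_ h1 h2]]] //.
    by have := hl i ltac:(lia); rewrite e /layer /nodeS /=; lia.
  by have := hl i ltac:(lia); rewrite e /layer /nodeE /=; lia.
have hlam : forall i, (1 <= i <= n)%N -> plam q i = 0 \/ plam q i = 1.
  move=> i hi; rewrite /plam; case/orP: (hmid i hi) => /eqP ->.
    by right; rewrite subrr add0r.
  by left; rewrite -addn1 natrD; ring.
split => //.
- have -> : \sum_(1 <= i < n.+1) (1 - plam q i) =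
            \sum_(1 <= i < n.+1) ((lbar (q i))%:R - (lbar (q i.-1))%:R).
    by apply: eq_bigr => i _; rewrite /plam; ring.
  rewrite big_add1 /= telescope_sumr // q0 (_ : (lbar (nodeS R))%:R = 0 :> R) // subr0.
  by rewrite ler_nat; case: (hNi n ltac:(lia)).
- split.
  + by move=> i hi /=; apply: (@Yset_ge _ i); case: (hNi i hi).
  + by rewrite /=; apply: Yset_n; case: (hNi n ltac:(lia)).
  + move=> i hi; have := arc_mid (hq.2 i.-1 ltac:(lia)).
    rewrite prednK; last lia.
    rewrite hl; last lia.
    move=> /(_ hi) /andP[_ /orP[/eqP ->|/eqP ->]].
      have := Yset_ge (hNi i ltac:(lia)).2.
      by case: (hlam i ltac:(lia)) => ->; lra.
    by rewrite /plam; lra.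
Qed.


Definition fset i la y := [set r | exists mu, uL i * la <= mu <= uU i * la /\
     r = y * (mu - s i) - rho * (`|mu - muh i| `^ p) - rho * (`|la - lamh i| `^ p)].

Lemma f_hassup i la y : (1 <= i <= n)%N -> la = 0 \/ la = 1 -> has_sup (fset i la y).
Proof.
move=> hi hla; have [hL hLU] := hu hi; split.
  exists (y * (uL i * la - s i) - rho * (`|uL i * la - muh i| `^ p)
            - rho * (`|la - lamh i| `^ p)).
  exists (uL i * la); split => //; rewrite lexx /=.
  by case: hla => ->; rewrite ?mulr0 ?mulr1 // ltW.
exists (`|y| * (`|uL i * la| + `|uU i * la| + `|s i|)).
move=> r [m [/andP[h1 h2] ->]].
have p1 := powR_ge0 `|m - muh i| p; have p2 := powR_ge0 `|la - lamh i| p.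
have q1 : 0 <= rho * (`|m - muh i| `^ p) by apply: mulr_ge0.
have q2 : 0 <= rho * (`|la - lamh i| `^ p) by apply: mulr_ge0.
apply: (le_trans (y := y * (m - s i))); first lra.
apply: (le_trans (ler_norm _)); rewrite normrM; apply: ler_wpM2l => //.
apply: (le_trans (ler_normB _ _)); rewrite lerD2r.
have a1 := ler_norm (uU i * la); have a2 := ler_norm (- (uL i * la)).
rewrite normrN in a2.
rewrite ler_norml; apply/andP; split.
  have := normr_ge0 (uU i * la); lra.
have := normr_ge0 (uL i * la); lra.
Qed.

Lemma term_le_f i la y m : (1 <= i <= n)%N -> la = 0 \/ la = 1 ->
  uL i * la <= m <= uU i * la ->
  y * (m - s i) - rho * (`|m - muh i| `^ p) - rho * (`|la - lamh i| `^ p) <= fij i la y.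
Proof.
move=> hi hla hm; apply: sup_upper_bound; first exact: f_hassup.
by exists m.
Qed.

Lemma term_sum (y mu lam : nat -> R) :
  \sum_(1 <= i < n.+1) (y i * (mu i - s i) - rho * (`|mu i - muh i| `^ p)
     - rho * (`|lam i - lamh i| `^ p)) =
  \sum_(1 <= i < n.+1) y i * (mu i - s i) - rho * dist_pp n p mu lam muh lamh.
Proof.
rewrite /dist_pp mulr_sumr -sumrB; apply: eq_bigr => i _; ring.
Qed.

Lemma sum_f_le_omega (lam y : nat -> R) :
  (forall i, (1 <= i <= n)%N -> lam i = 0 \/ lam i = 1) ->
  \sum_(1 <= i < n.+1) (1 - lam i) <= K%:R ->
  dfeas n d0 C lam y ->
  ((\sum_(1 <= i < n.+1) fij i (lam i) (y i))%:E <= omega' n K d0 C uL uU p rho s muh lamh)%E.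
Proof.
move=> hl hK hy; apply/lee_subgt0Pr => e e0.
have n0 : (0 < n%:R :> R) by rewrite ltr0n.
set e' := e / n%:R.
have e'0 : 0 < e' by rewrite divr_gt0.
have : forall i, exists m, (1 <= i <= n)%N -> uL i * lam i <= m <= uU i * lam i /\
    fij i (lam i) (y i) - e' <
    y i * (m - s i) - rho * (`|m - muh i| `^ p) - rho * (`|lam i - lamh i| `^ p).
  move=> i; case: (boolP (1 <= i <= n)%N) => hi; last by exists 0.
  have [r [m [hm ->]] hr] := sup_adherent e'0 (f_hassup (y i) hi (hl i hi)).
  by exists m => _; split.
move=> /choice [mu hmu].
have hl0 : forall i, (1 <= i <= n)%N -> 0 <= lam i.
  by move=> i hi; case: (hl i hi) => ->.
apply: le_trans (ereal_sup_ubound _); last first.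
  exists mu, lam; split; last by [].
  by split; [exact: hl | split; [exact: hK | move=> i hi; case: (hmu i hi)]].
rewrite -EFinB lee_fin.
apply: (le_trans _ (lerB (g_ge s n1 d0ge Cge mu hl0 hy) (lexx _))).
rewrite -term_sum.
have -> : \sum_(1 <= i < n.+1) fij i (lam i) (y i) - e =
          \sum_(1 <= i < n.+1) (fij i (lam i) (y i) - e').
  rewrite sumrB sumr_const_nat subn1 /= /e'.
  congr (_ - _); rewrite -[_ *+ n]mulr_natr divfK //; by rewrite gt_eqF.
rewrite big_nat [X in _ <= X]big_nat; apply: ler_sum => i hi.
by apply: ltW; case: (hmu i hi).
Qed.


Lemma path_le_omega_val q : is_path q ->
  ((pathval q)%:E <= omega' n K d0 C uL uU p rho s muh lamh)%E.
Proof.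
move=> hq; rewrite pathval_eq //; have [h1 h2 h3] := path_props hq.
exact: sum_f_le_omega.
Qed.

Lemma ys_form (lam mu : nat -> R) :
  (forall i, (1 <= i <= n)%N -> lam i = 0 \/ lam i = 1) ->
  forall k, (k < n)%N -> exists m, (m <= k)%N /\
    (ys n d0 C s lam mu k = - d0 + m%:R \/ ys n d0 C s lam mu k = C + m%:R).
Proof.
move=> hl; elim => [|k IH] hk.
  by exists 0%N; split => //=; case: ifP => _; [right|left]; rewrite addr0.
have [m [hm hys]] := IH ltac:(lia).
rewrite /=; case: ifP => _; last by exists 0%N; split => //; left; rewrite addr0.
case: (hl (n - k)%N ltac:(lia)) => ->.
  by exists m; split; [lia | rewrite addr0].
exists m.+1; split; first lia.
by rewrite -addn1 natrD; case: hys => ->; [left|right]; ring.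
Qed.

Lemma omega_le_path :
  (omega' n K d0 C uL uU p rho s muh lamh <= path_lp n K d0 C uL uU p rho s muh lamh)%E.
Proof.
apply: ge_ereal_sup => x [mu [lam [[hl [hK hm]] ->]]].
have hl0 : forall i, (1 <= i <= n)%N -> 0 <= lam i.
  by move=> i hi; case: (hl i hi) => ->.
set yst := ystar n d0 C s lam mu.
pose lbn i := (\sum_(1 <= j < i.+1) nat_of_bool (lam j == 0%R :> R))%N.
have lbnS : forall i, lbn i.+1 = (lbn i + nat_of_bool (lam i.+1 == 0%R :> R))%N.
  by move=> i; rewrite /lbn big_nat_recr.
have lbn0 : lbn 0%N = 0%N by rewrite /lbn big_geq.
have lbnR : forall i, (i <= n)%N -> (lbn i)%:R = \sum_(1 <= j < i.+1) (1 - lam j).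
  elim => [|i IH] hi; first by rewrite lbn0 big_geq.
  rewrite lbnS natrD IH; last lia.
  rewrite [in RHS]big_nat_recr //=; congr (_ + _).
  by case: (hl i.+1 ltac:(lia)) => ->; rewrite ?eqxx ?subr0 ?oner_eq0 ?subrr.
have lbnK : forall i, (i <= n)%N -> (lbn i <= K)%N.
  move=> i hi; rewrite -(ler_nat R); apply: le_trans hK.
  rewrite lbnR // [X in _ <= X](@big_cat_nat _ _ _ i.+1) //=; try lia.
  rewrite lerDl big_nat sumr_ge0 // => j hj.
  by rewrite subr_ge0; case: (hl j ltac:(lia)) => ->.
have lbnP : forall i, (1 <= i <= n)%N -> (lbn i.-1)%:R - (lbn i)%:R + 1 = lam i.
  move=> [|i] hi; first lia.
  rewrite lbnS /= natrD.
  by case: (hl i.+1 hi) => ->; rewrite ?eqxx ?oner_eq0 /=; ring.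
have yY : forall i, (1 <= i <= n)%N -> yst i \in Yset n d0 C i.
  move=> i hi; have [m [hmk hy]] := @ys_form lam mu hl (n - i)%N ltac:(lia).
  rewrite /yst /ystar mem_cat; apply/orP.
  case: hy => ->; [left|right]; apply: (map_f (fun m : nat => _ + m%:R));
    rewrite mem_iota; lia.
pose q j := if j == 0%N then nodeS R else if j == n.+1 then nodeE R n
            else ((j, lbn j), yst j).
have qj : forall j, (1 <= j <= n)%N -> q j = ((j, lbn j), yst j).
  move=> j hj; rewrite /q (_ : (j == 0%N) = false); last by apply/eqP; lia.
  by rewrite (_ : (j == n.+1) = false) //; apply/eqP; lia.
have qE : q n.+1 = nodeE R n by rewrite /q /= eqxx.
have qN : forall j, (1 <= j <= n)%N -> q j \in N.
  move=> j hj; rewrite qj //.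
  by apply: nodes_L => //; [apply: lbnK; lia | apply: yY].
have hq : is_path q.
  split; first by [].
  move=> j hj; rewrite mem_arcs.
  case: (posnP j) => [->|j0].
    apply/and3P; split; first by rewrite nodeS_in.
      by apply: qN; lia.
    rewrite (_ : q 0%N = nodeS R) // (qj 1%N); last lia.
    rewrite /is_arc /layer /lbar /=; apply/orP; left; apply/orP; left.
    by rewrite lbnS lbn0; case: (lam 1%N == 0).
  case: (eqVneq j n) => [->|jn].
    apply/and3P; split; first by apply: qN; lia.
      by rewrite qE nodeE_in.
    rewrite qE qj; last lia.
    by rewrite /is_arc /layer /lbar /yval /= !eqxx orbT.
  apply/and3P; split; [by apply: qN; lia | by apply: qN; lia |].
  rewrite (qj j); last lia.
  rewrite (qj j.+1); last lia.
  rewrite /is_arc /layer /lbar /yval /=; apply/orP; right.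
  apply/and4P; split; first (apply/andP; split; lia).
  - by [].
  - by rewrite lbnS; case: (lam j.+1 == 0); rewrite /= ?addn0 ?addn1 eqxx ?orbT.
  - have := lbnP j.+1 ltac:(lia); rewrite /= => ->.
    have jn' : (j < n)%N by rewrite ltn_neqAle jn hj.
    rewrite /yst ystar_S; last lia.
    by case: ifP => _; rewrite eqxx ?orbT.
apply: le_trans (path_flow hq); rewrite lee_fin pathval_eq //.
apply: (le_trans (lerB (g_le s n1 d0ge Cge mu hl0) (lexx _))).
rewrite -term_sum big_nat [X in _ <= X]big_nat; apply: ler_sum => i hi.
have -> : plam q i = lam i.
  rewrite /plam -lbnP // (qj i) //.
  case: (posnP i.-1) => [e|ne].
    by rewrite e (_ : q 0%N = nodeS R) // lbn0.
  by rewrite (qj i.-1) //; lia.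
have -> : yval (q i) = yst i.
  by rewrite qj.
by apply: term_le_f => //; [apply: hl | apply: hm].
Qed.


Definition omax2 (o1 o2 : option R) : option R :=
  match o1, o2 with
  | Some a, Some b => Some (Num.max a b)
  | Some a, None => Some a
  | None, o => o
  end.
Definition omaxl (l : seq (option R)) := foldr omax2 None l.

Lemma omaxl_None l : omaxl l = None -> forall o, o \in l -> o = None.
Proof.
elim: l => [|o l IH] //= h o'; rewrite inE => /orP[/eqP ->|].
  by move: h; case: o => // a; case: (omaxl l).
by apply: IH; move: h; case: o => //; case: (omaxl l).
Qed.

Lemma omaxl_ge l b : Some b \in l -> exists a, omaxl l = Some a /\ b <= a.
Proof.
elim: l => [|o l IH] //=; rewrite inE => /orP[/eqP <-|hb].
  case: (omaxl l) => [c|] /=; last by exists b.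
  by exists (Num.max b c); split => //; rewrite le_max lexx.
have [a [-> ha]] := IH hb.
case: o => [c|] /=; last by exists a.
by exists (Num.max c a); split => //; rewrite le_max ha orbT.
Qed.

Lemma omaxl_Some l a : omaxl l = Some a -> Some a \in l.
Proof.
elim: l a => [|o l IH] a //=; case: o => [c|]; last by move=> /IH h; rewrite inE h orbT.
case e: (omaxl l) => [d|] /=.
  case=> <-; rewrite inE; case: (leP c d) => _; last by rewrite eqxx.
  by rewrite (IH d e) orbT.
by case=> ->; rewrite inE eqxx.
Qed.

Fixpoint pot (f : nat) (k : node R) : option R :=
  if layer k == n.+1 then Some 0 else
  if f is f'.+1 then
    omaxl [seq omap (fun b => glen kl + b) (pot f' kl.2) | kl <- A & kl.1 == k]
  else None.

Definition Pot k := pot (n.+1 - layer k) k.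

Lemma pot_top f k : layer k = n.+1 -> pot f k = Some 0.
Proof. by case: f => [|f] /= ->; rewrite eqxx. Qed.

Lemma Pot_E : Pot (nodeE R n) = Some 0.
Proof. by rewrite /Pot pot_top. Qed.

Lemma pot_arc k l b : (k, l) \in A -> Pot l = Some b ->
  exists a, Pot k = Some a /\ glen (k, l) + b <= a.
Proof.
move=> hkl hb; have [e hl] := arc_layer hkl.
rewrite /Pot (_ : (n.+1 - layer k = (n.+1 - layer l).+1)%N); last lia.
rewrite /= (_ : (layer k == n.+1) = false); last by apply/eqP; lia.
apply: omaxl_ge; apply/mapP; exists (k, l).
  by rewrite mem_filter /= eqxx.
by rewrite /= -/(Pot l) hb.
Qed.

Lemma psum_seq_eq0 (T : eqType) (r : seq T) (Q : pred T) (F : T -> R) :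
  (forall x, x \in r -> Q x -> 0 <= F x) -> \sum_(x <- r | Q x) F x = 0 ->
  forall x, x \in r -> Q x -> F x = 0.
Proof.
elim: r => [|y r IH] //= hF; rewrite big_cons.
have hr : forall x, x \in r -> Q x -> 0 <= F x.
  by move=> x xr; apply: hF; rewrite inE xr orbT.
case Qy: (Q y) => hs x; rewrite inE => /orP[/eqP ->|xr] Qx.
- have h1 := hF y (mem_head _ _) Qy; have h2 : 0 <= \sum_(x <- r | Q x) F x.
    by rewrite big_seq_cond sumr_ge0 // => i /andP[]; apply: hr.
  by move/eqP: hs; rewrite paddr_eq0 // => /andP[/eqP].
- have h1 := hF y (mem_head _ _) Qy; have h2 : 0 <= \sum_(x <- r | Q x) F x.
    by rewrite big_seq_cond sumr_ge0 // => i /andP[]; apply: hr.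
  move/eqP: hs; rewrite paddr_eq0 // => /andP[_ /eqP hs].
  exact: IH.
- by rewrite Qx in Qy.
- exact: IH.
Qed.

Lemma no_arc_into_S kl : kl \in A -> kl.2 == nodeS R = false.
Proof.
case: kl => k l hkl /=; have [e _] := arc_layer hkl.
by apply/eqP => hl; move: e; rewrite hl.
Qed.

Lemma pot_dead (z : node R * node R -> R) :
  (forall kl, kl \in A -> 0 <= z kl) ->
  (forall k, k \in N ->
        \sum_(kl <- A | kl.1 == k) z kl - \sum_(kl <- A | kl.2 == k) z kl
        = (if k == nodeS R then 1 else if k == nodeE R n then -1 else 0)) ->
  forall d l, (n.+1 - layer l <= d)%N -> l \in N -> Pot l = None ->
  forall kl, kl \in A -> kl.2 == l -> z kl = 0.
Proof.
move=> hz hc; elim => [|d IH] l hd lN hP.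
  have hl := nodes_layer lN.
  by move: hP; rewrite /Pot pot_top //; lia.
have hl := nodes_layer lN.
have lnE : (layer l == n.+1) = false.
  by apply/negbTE/negP => /eqP e; move: hP; rewrite /Pot pot_top.
move: (hP); rewrite /Pot (_ : (n.+1 - layer l = (n - layer l).+1)%N); last first.
  by move/negbT: lnE => /eqP; lia.
rewrite /= lnE => /omaxl_None hN.
have hout : forall kl, kl \in A -> kl.1 == l -> z kl = 0.
  case=> k' l' hkl /= /eqP ek; subst k'.
  have [e hl'] := arc_layer hkl.
  apply: (IH l') => //.
  - lia.
  - by move: hkl; rewrite mem_arcs => /and3P[].
  - have := hN (omap (fun b => glen (l, l') + b) (pot (n - layer l) l')).
    rewrite /Pot (_ : (n.+1 - layer l' = n - layer l)%N); last lia.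
    move=> h; have := h ltac:(by apply/mapP; exists (l, l') => //; rewrite mem_filter /= eqxx).
    by case: (pot (n - layer l) l').
have out0 : \sum_(kl <- A | kl.1 == l) z kl = 0.
  by rewrite big_seq_cond big1 // => kl /andP[kA e]; apply: hout.
case: (eqVneq l (nodeS R)) => [->|lS].
  by move=> kl kA e; rewrite no_arc_into_S in e.
have lE : l != nodeE R n.
  by apply/eqP => e; move: hP; rewrite e Pot_E.
have := hc l lN; rewrite (negbTE lS) (negbTE lE) out0 sub0r => /eqP.
rewrite oppr_eq0 => /eqP hin.
apply: psum_seq_eq0 => //.
by move=> x xA _; apply: hz.
Qed.

Lemma pot_path f k a : pot f k = Some a -> k \in N ->
  exists q : nat -> node R, [/\ q (layer k) = k,
    forall j, (layer k <= j <= n)%N -> (q j, q j.+1) \in A &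
    a = \sum_(layer k <= j < n.+1) glen (q j, q j.+1)].
Proof.
elim: f k a => [|f IH] k a /=.
  case: ifP => // /eqP e [<-] _; exists (fun _ => k); split => //.
    by move=> j; rewrite e; lia.
  by rewrite e big_geq.
case: ifP => [/eqP e [<-] _|lk].
  exists (fun _ => k); split => //.
    by move=> j; rewrite e; lia.
  by rewrite e big_geq.
move=> /omaxl_Some /mapP [[k' l] ]; rewrite mem_filter /= => /andP[/eqP ek hkl].
subst k'; case e: (pot f l) => [b|] //= [ea] kN.
have lN : l \in N by move: hkl; rewrite mem_arcs => /and3P[].
have [q [ql hq hb]] := IH l b e lN.
have [el hl] := arc_layer hkl.
exists (fun j => if j == layer k then k else q j); split.
- by rewrite eqxx.
- move=> j hj; case: (eqVneq j (layer k)) => [->|ne].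
    rewrite (_ : ((layer k).+1 == layer k) = false); last lia.
    by rewrite -el ql.
  rewrite (_ : (j.+1 == layer k) = false); last lia.
  by apply: hq; lia.
- rewrite ea big_ltn; last lia.
  rewrite eqxx (_ : ((layer k).+1 == layer k) = false); last lia.
  rewrite -el ql hb; congr (_ + _).
  apply: eq_big_nat => j hj.
  rewrite (_ : (j == layer k) = false); last lia.
  by rewrite (_ : (j.+1 == layer k) = false); last lia.
Qed.


Lemma path_le_omega :
  (path_lp n K d0 C uL uU p rho s muh lamh <= omega' n K d0 C uL uU p rho s muh lamh)%E.
Proof.
apply: ge_ereal_sup => x [z [hz [hc ->]]].
have hdead := pot_dead hz hc.
have dead : forall l, l \in N -> Pot l = None ->
    forall kl, kl \in A -> kl.2 == l -> z kl = 0.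
  by move=> l lN hP; apply: (hdead (n.+1 - layer l)%N).
case hPS: (Pot (nodeS R)) => [a|]; last first.
  have out0 : \sum_(kl <- A | kl.1 == nodeS R) z kl = 0.
    rewrite big_seq_cond big1 // => [[k l]] /andP[kA /= /eqP ek]; subst k.
    case hl: (Pot l) => [b|].
      by have [a' [ha _]] := pot_arc kA hl; rewrite ha in hPS.
    apply: (dead l) => //.
    by move: kA; rewrite mem_arcs => /and3P[].
  have in0 : \sum_(kl <- A | kl.2 == nodeS R) z kl = 0.
    by rewrite big_seq_cond big1 // => kl /andP[kA]; rewrite no_arc_into_S.
  have := hc _ (nodeS_in n K d0 C); rewrite out0 in0 subrr eqxx => /eqP.
  by rewrite eq_sym oner_eq0.
have [q [q0 hq ha]] := pot_path hPS (nodeS_in n K d0 C).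
have hpq : is_path q by split.
apply: le_trans (path_le_omega_val hpq).
rewrite lee_fin -[pathval q]/(\sum_(0 <= j < n.+1) glen (q j, q j.+1)) -ha.
pose pi k := odflt 0 (Pot k).
have step : forall kl, kl \in A -> glen kl * z kl <= (pi kl.1 - pi kl.2) * z kl.
  case=> k l kA.
  case hl: (Pot l) => [b|].
    have [a' [ha' hle]] := pot_arc kA hl.
    apply: ler_wpM2r; first exact: hz.
    have -> : pi (k, l).1 = a' by rewrite /pi ha'.
    have -> : pi (k, l).2 = b by rewrite /pi hl.
    lra.
  have lN : l \in N by move: kA; rewrite mem_arcs => /and3P[].
  by rewrite (dead l lN hl (k, l) kA) ?eqxx // !mulr0.
apply: (le_trans (y := \sum_(kl <- A) (pi kl.1 - pi kl.2) * z kl)).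
  by rewrite big_seq [X in _ <= X]big_seq; apply: ler_sum => kl kA; apply: step.
have uN : uniq N := undup_uniq _.
have hfst : forall kl, kl \in A -> kl.1 \in N.
  by case=> k l; rewrite mem_arcs => /and3P[].
have hsnd : forall kl, kl \in A -> kl.2 \in N.
  by case=> k l; rewrite mem_arcs => /and3P[].
have e1 : \sum_(kl <- A) pi kl.1 * z kl =
          \sum_(k <- N) pi k * \sum_(kl <- A | kl.1 == k) z kl.
  rewrite (@big_partition_seq _ _ _ A N fst) //; apply: eq_bigr => k _.
  by rewrite mulr_sumr; apply: eq_bigr => kl /eqP ->.
have e2 : \sum_(kl <- A) pi kl.2 * z kl =
          \sum_(k <- N) pi k * \sum_(kl <- A | kl.2 == k) z kl.
  rewrite (@big_partition_seq _ _ _ A N snd) //; apply: eq_bigr => k _.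
  by rewrite mulr_sumr; apply: eq_bigr => kl /eqP ->.
have -> : \sum_(kl <- A) (pi kl.1 - pi kl.2) * z kl =
          \sum_(kl <- A) pi kl.1 * z kl - \sum_(kl <- A) pi kl.2 * z kl.
  by rewrite -sumrB; apply: eq_bigr => kl _; rewrite mulrBl.
rewrite e1 e2 -sumrB.
have -> : \sum_(k <- N) (pi k * \sum_(kl <- A | kl.1 == k) z kl -
                        pi k * \sum_(kl <- A | kl.2 == k) z kl) =
          \sum_(k <- N) ((if k == nodeS R then pi k else 0) -
                         (if k == nodeE R n then pi k else 0)).
  rewrite big_seq [RHS]big_seq; apply: eq_bigr => k kN.
  rewrite -mulrBr hc //.
  case: (eqVneq k (nodeS R)) => [->|nS].
    by rewrite nodeS_neq_E mulr1 subr0.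
  case: (eqVneq k (nodeE R n)) => [->|nE]; last by rewrite mulr0 subrr.
  by rewrite mulrN1 sub0r.
rewrite sumrB -!big_mkcond /= !big_seq_pred1 //;
  [| exact: nodeE_in | exact: nodeS_in].
by rewrite /pi Pot_E hPS /= subr0.
Qed.

End Main.

Unset Implicit Arguments.

Theorem proposition5 (R : realType) (n N K : nat) (T d0 C : R)
  (uL uU : nat -> R) (muh lamh : 'I_N -> nat -> R)
  (j : 'I_N) (rho p : R) (s : nat -> R) :
  (1 <= n)%N -> 0 < T -> 0 <= d0 -> 0 <= C ->
  (forall i, (1 <= i <= n)%N -> 0 <= uL i /\ uL i < uU i) ->
  (1 <= K <= n)%N ->
  (forall j' : 'I_N, inXi n K uL uU (muh j') (lamh j')) ->
  0 <= rho -> 1 <= p ->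
  (forall i, (1 <= i <= n)%N -> 0 <= s i) -> \sum_(1 <= i < n.+1) s i <= T ->
  omega' n K d0 C uL uU p rho s (muh j) (lamh j)
  = path_lp n K d0 C uL uU p rho s (muh j) (lamh j).
Proof.
move=> n1 _ d0ge Cge hu _ _ rho0 _ _ _.
apply: le_anti; apply/andP; split.
  exact: omega_le_path.
exact: path_le_omega.
Qed.
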